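(* If $x\in\mathrm{Sort}_n(132,321)$, then $x$ avoids the pattern $123$.
   Context: A permutation contains a pattern $p$ if it has a subsequence order-isomorphic to $p$; otherwise it avoids $p$. For a set $T$ of patterns, the map $s_T$ is defined as follows: the entries of the input permutation are read from left to right, with an initially empty stack. At each step, if the input is nonempty and pushing the next input entry onto the stack produces a stack whose contents, read from top to bottom, avoid every pattern in $T$, that entry is pushed; otherwise the top entry of the stack is popped and appended to the output. When the input is exhausted, the remaining stack entries are popped one at a time to the output. Write $s_{\sigma,\tau}=s_{\{\sigma,\tau\}}$ and $s=s_{\{21\}}$ (West's stack-sorting map). $\mathrm{Sort}_n(\sigma,\tau)$ is the set of $x\in S_n$ with $s(s_{\sigma,\tau}(x))=12\cdots n$. *)

(* Defs.v *)
(* Permutations of [n] are sequences of nat that are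
   rearrangements of 1..n (iota 1 n). *)
From mathcomp Require Import all_boot.
Set Implicit Arguments. Unset Strict Implicit. Unset Printing Implicit Defensive.

Definition order_iso (s p : seq nat) : bool :=
  (size s == size p) &&
  all (fun i => all (fun j => (nth 0 s i < nth 0 s j) == (nth 0 p i < nth 0 p j))
                    (iota 0 (size p))) (iota 0 (size p)).

Fixpoint all_masks (k : nat) : seq (seq bool) :=
  match k with
  | 0 => [:: [::]]
  | k'.+1 => [seq b :: m | b <- [:: true; false], m <- all_masks k']
  end.

Definition contains (s p : seq nat) : bool :=
  has (fun m => order_iso (mask m s) p) (all_masks (size s)).

Definition avoids (s p : seq nat) : bool := ~~ contains s p.

(* The stack is a list whose head is the top of the stack, so the stack
   contents read from top to bottom is just the list itself.  Each step
   either pushes or pops; fuel 2n+1 is sufficient for an input of size n. *)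
Fixpoint stack_run (T : seq (seq nat)) (fuel : nat) (inp stk out : seq nat)
  : seq nat :=
  match fuel with
  | 0 => out ++ stk
  | fuel'.+1 =>
    match inp with
    | a :: inp' =>
        if all (fun p => avoids (a :: stk) p) T
        then stack_run T fuel' inp' (a :: stk) out
        else match stk with
             | b :: stk' => stack_run T fuel' inp stk' (rcons out b)
             | [::] => out (* unreachable when patterns have length >= 2 *)
             end
    | [::] => out ++ stk
    end
  end.

Definition sT (T : seq (seq nat)) (x : seq nat) : seq nat :=
  stack_run T (2 * size x).+1 x [::] [::].

Definition s2 (sigma tau : seq nat) := sT [:: sigma; tau].

Definition west_s := sT [:: [:: 2; 1]].

Definition Sort_n (n : nat) (sigma tau : seq nat) (x : seq nat) : Prop :=
  perm_eq x (iota 1 n) /\ west_s (s2 sigma tau x) = iota 1 n.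

Example ex1 : west_s [:: 3; 1; 2] = [:: 1; 2; 3]. Proof. vm_compute. reflexivity. Qed.
Example ex2 : west_s [:: 2; 3; 1] = [:: 2; 1; 3]. Proof. vm_compute. reflexivity. Qed.
Example ex3 : contains [:: 2; 4; 1; 3] [:: 1; 2] = true. Proof. vm_compute. reflexivity. Qed.
Example ex4 : avoids [:: 3; 2; 1] [:: 1; 2] = true. Proof. vm_compute. reflexivity. Qed.
Example ex5 : s2 [:: 1;3;2] [:: 3;2;1] [:: 1;2;3] = [:: 2;3;1]. Proof. vm_compute. reflexivity. Qed.

(* Main.v *)
Require Import Defs.
From mathcomp Require Import all_boot zify.
Set Implicit Arguments. Unset Strict Implicit. Unset Printing Implicit Defensive.
Lemma mem_all_masks k m : (m \in all_masks k) = (size m == k).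
Proof.
have inj (b : bool) : injective (cons b) by move=> ? ? [].
elim: k m => [|k IH] [|b m] //=.
- rewrite cats0 mem_cat; apply/negbTE; rewrite negb_or.
  by apply/andP; split; apply/mapP => -[].
- rewrite cats0 mem_cat eqSS -IH.
  have nm (b' : bool) s : b != b' -> (b :: m \in [seq b' :: m0 | m0 <- s]) = false.
    by move=> nb; apply/negbTE/mapP => -[? _ [E _]]; rewrite E eqxx in nb.
  move: nm; case: b => /= nm.
  - by rewrite mem_map // nm // orbF.
  - by rewrite mem_map // nm.
Qed.

Lemma iso132 u1 u2 u3 : order_iso [:: u1; u2; u3] [:: 1; 3; 2] = (u1 < u3 < u2).
Proof.
rewrite /order_iso /= !ltnn /=.
case: (ltngtP u1 u2); case: (ltngtP u1 u3); case: (ltngtP u2 u3) => //= *; lia.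
Qed.
Lemma iso321 u1 u2 u3 : order_iso [:: u1; u2; u3] [:: 3; 2; 1] = (u3 < u2 < u1).
Proof.
rewrite /order_iso /= !ltnn /=.
case: (ltngtP u1 u2); case: (ltngtP u1 u3); case: (ltngtP u2 u3) => //= *; lia.
Qed.
Lemma iso123 u1 u2 u3 : order_iso [:: u1; u2; u3] [:: 1; 2; 3] = (u1 < u2 < u3).
Proof.
rewrite /order_iso /= !ltnn /=.
case: (ltngtP u1 u2); case: (ltngtP u1 u3); case: (ltngtP u2 u3) => //= *; lia.
Qed.
Lemma iso21 u1 u2 : order_iso [:: u1; u2] [:: 2; 1] = (u2 < u1).
Proof.
rewrite /order_iso /= !ltnn /=.
case: (ltngtP u1 u2) => //= *; lia.
Qed.

Lemma containsP s p : reflect (exists2 q, subseq q s & order_iso q p) (contains s p).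
Proof.
apply: (iffP hasP) => [[m Hm Hiso]|[q /subseqP [m Hsz ->] Hiso]].
- exists (mask m s) => //; exact: mask_subseq.
- by exists m => //; rewrite mem_all_masks Hsz.
Qed.

Lemma contains3 s p : size p = 3 -> contains s p ->
  exists u1 u2 u3, subseq [:: u1; u2; u3] s /\ order_iso [:: u1; u2; u3] p.
Proof.
move=> Hp /containsP [q Hq Hiso].
have: size q = 3 by move: Hiso; rewrite /order_iso Hp => /andP [/eqP].
case: q Hq Hiso => [|u1 [|u2 [|u3 [|]]]] //= Hq Hiso _.
by exists u1, u2, u3.
Qed.

Lemma avoids_tail t s p : avoids (t :: s) p -> avoids s p.
Proof.
apply: contra => /containsP [q Hq Hiso]; apply/containsP; exists q => //.
exact: (subseq_trans Hq (subseq_cons s t)).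
Qed.

Lemma avoids1 a p : 2 <= size p -> avoids [:: a] p.
Proof. by case: p => [|? [|? ?]]. Qed.

Lemma avoids0 p : 1 <= size p -> avoids [::] p.
Proof. by case: p => [|? ?]. Qed.

Lemma run_inv T (Inv : seq nat -> seq nat -> seq nat -> Prop) :
  all (fun p => 2 <= size p) T ->
  (forall a inp stk out, Inv (a :: inp) stk out ->
     all (fun p => avoids (a :: stk) p) T -> Inv inp (a :: stk) out) ->
  (forall a inp b stk out, Inv (a :: inp) (b :: stk) out ->
     ~~ all (fun p => avoids (a :: b :: stk) p) T -> Inv (a :: inp) stk (rcons out b)) ->
  forall fuel inp stk out, Inv inp stk out -> 2 * size inp + size stk < fuel ->
  exists stk' out', Inv [::] stk' out' /\ stack_run T fuel inp stk out = out' ++ stk'.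
Proof.
move=> HT Hpush Hpop; elim=> [|f IH] inp stk out HI Hf; first by [].
case: inp HI Hf => [|a inp] HI Hf.
  by exists stk, out.
rewrite /=; case: ifP => Hc.
- apply: IH; [exact: Hpush | simpl in Hf |- *; lia].
- case: stk HI Hf Hc => [|b stk] HI Hf Hc.
  + exfalso; move/negbT/negP: Hc; apply; apply/allP => p Hp.
    exact: avoids1 (allP HT p Hp).
  + apply: IH; [apply: Hpop => //; by rewrite Hc | simpl in Hf |- *; lia].
Qed.

Lemma idx_cat (l1 l2 : seq nat) (u w : nat) : uniq (l1 ++ l2) -> u \in l1 -> w \in l2 ->
  index u (l1 ++ l2) < index w (l1 ++ l2).
Proof.
move=> U Hu Hw; rewrite !index_cat Hu.
have Hw1 : w \notin l1.
  move: U; rewrite cat_uniq => /and3P [_ /hasPn H _]; exact: H.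
rewrite (negbTE Hw1); apply: (leq_trans _ (leq_addr _ _)); by rewrite index_mem.
Qed.

Lemma subseq2_split (u w : nat) (l : seq nat) : subseq [:: u; w] l ->
  exists l1 l2, l = l1 ++ l2 /\ u \in l1 /\ w \in l2.
Proof.
elim: l => [|z l IH] //=.
case: eqP => [<-|_] H.
- exists [:: u], l; split => //; rewrite inE eqxx; split => //.
  by rewrite sub1seq in H.
- have [l1 [l2 [-> [H1 H2]]]] := IH H.
  by exists (z :: l1), l2; rewrite inE H1 orbT.
Qed.

Lemma idx_sub (u w : nat) (l : seq nat) : uniq l -> subseq [:: u; w] l -> index u l < index w l.
Proof.
move=> U /subseq2_split [l1 [l2 [E [H1 H2]]]]; subst l; exact: idx_cat.
Qed.

Lemma subseq_ins (s l1 l2 : seq nat) (v : nat) : subseq s (l1 ++ l2) -> subseq s (l1 ++ v :: l2).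
Proof.
move=> H; apply: (subseq_trans H); apply: cat_subseq => //; exact: subseq_cons.
Qed.

Lemma perm_push (pfx out stk : seq nat) v :
  perm_eq pfx (out ++ stk) -> perm_eq (rcons pfx v) (out ++ v :: stk).
Proof.
move=> H; rewrite perm_rcons perm_sym -cat1s perm_catCA /= perm_cons perm_sym //.
Qed.

Lemma seq_min (s : seq nat) : s != [::] -> exists m, m \in s /\ forall z, z \in s -> m <= z.
Proof.
elim: s => [|y s IH] // _.
case: s IH => [|y' s] IH.
- by exists y; split; [rewrite inE | move=> z; rewrite inE => /eqP ->].
- have [m [Hm Hmin]] := IH isT.
  case: (leqP y m) => Hym.
  + exists y; split; first exact: mem_head.
    move=> z; rewrite inE => /orP [/eqP -> //|/Hmin]; exact: leq_trans.
  + exists m; split; first by rewrite inE Hm orbT.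
    move=> z; rewrite inE => /orP [/eqP -> |/Hmin //]; exact: ltnW.
Qed.

Lemma pop_contra v a s : avoids (a :: s) [:: 1; 3; 2] -> avoids (a :: s) [:: 3; 2; 1] ->
  all (fun z => a < z) s ->
  avoids (v :: a :: s) [:: 1; 3; 2] && avoids (v :: a :: s) [:: 3; 2; 1].
Proof.
move=> H1 H2 Hs.
have key u2 u3 : subseq [:: u2; u3] (a :: s) -> u3 < u2 -> False.
  move=> /= Hsub Hlt; case: (eqVneq u2 a) Hsub => [Heq|ne].
  - subst u2; rewrite /= sub1seq => Hu3; have := allP Hs u3 Hu3; lia.
  - move=> Hsub; have Hu3 : u3 \in s.
      by apply: (mem_subseq Hsub); rewrite !inE eqxx orbT.
    have := allP Hs u3 Hu3 => Hau3.
    move/negP: H1; apply; apply/containsP; exists [:: a; u2; u3].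
      by rewrite /= eqxx.
    by rewrite iso132 Hau3 Hlt.
apply/andP; split; apply/negP => /contains3 [] // u1 [u2 [u3 [Hsub Hiso]]].
- rewrite iso132 in Hiso; move: Hsub => /=; case: eqP => [_ Hs2|_ Hs3].
  + apply: (key u2 u3 Hs2); lia.
  + move/negP: H1; apply; apply/containsP; exists [:: u1; u2; u3] => //.
    by rewrite iso132.
- rewrite iso321 in Hiso; move: Hsub => /=; case: eqP => [_ Hs2|_ Hs3].
  + apply: (key u2 u3 Hs2); lia.
  + move/negP: H2; apply; apply/containsP; exists [:: u1; u2; u3] => //.
    by rewrite iso321.
Qed.

Definition T1 := [:: [:: 1; 3; 2]; [:: 3; 2; 1]].

Definition Inv1 (x : seq nat) (a b c : nat) (inp stk out : seq nat) : Prop :=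
  (exists pfx, x = pfx ++ inp /\ perm_eq pfx (out ++ stk)) /\
  (avoids stk [:: 1; 3; 2] && avoids stk [:: 3; 2; 1]) /\
  ((a \in inp -> all (fun z => a < z) stk) /\
   (a \notin inp -> exists s1 s2, stk = s1 ++ a :: s2 /\ all (fun z => a < z) s2)) /\
  (b \in stk -> subseq [:: b; a] stk) /\
  (c \notin inp -> subseq [:: b; c; a] (out ++ stk)).

Lemma s2_main x a b c : uniq x -> a < b < c -> subseq [:: b; c] x -> a \in x ->
  index a x < index b x ->
  (forall z, z \in x -> index z x < index b x -> a <= z) ->
  subseq [:: b; c; a] (s2 [:: 1; 3; 2] [:: 3; 2; 1] x) /\
  perm_eq x (s2 [:: 1; 3; 2] [:: 3; 2; 1] x).
Proof.
move=> Ux Habc Hbc Hax Hab Hmin.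
have Hbcx : index b x < index c x by exact: idx_sub.
have bx : b \in x by apply: (mem_subseq Hbc); rewrite inE eqxx.
have cx : c \in x by apply: (mem_subseq Hbc); rewrite !inE eqxx orbT.
have Hrun := @run_inv T1 (Inv1 x a b c) isT.
have [] := Hrun _ _ (2 * size x).+1 x [::] [::] _ _.
-
  move=> v inp stk out [[pfx [Ex Hp]] [Hav [[HA HB] [H4 H5]]]] /=; rewrite andbT => Hc.
  have Ex' : x = rcons pfx v ++ inp by rewrite cat_rcons.
  have Ux' := Ux; rewrite Ex' in Ux'.
  have Hidx w : w \in inp -> index v x < index w x.
    by move=> Hw; rewrite Ex'; apply: idx_cat => //; rewrite mem_rcons mem_head.
  have Hpfx w : w \in x -> w \notin v :: inp -> w \in out ++ stk.
    move=> Hw Hn; rewrite -(perm_mem Hp); move: Hw; rewrite Ex mem_cat.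
    by case/orP => // H; rewrite H in Hn.
  split; [|split; [exact: Hc|split; [split|split]]].
  + by exists (rcons pfx v); split => //; apply: perm_push.
  + move=> Hai; have := HA (mem_behead (s := v :: inp) Hai) => Hall /=; rewrite Hall andbT.
    have Hva := Hidx _ Hai.
    have vx : v \in x by rewrite Ex mem_cat mem_head orbT.
    have := Hmin v vx (ltn_trans Hva Hab) => Hav'.
    rewrite ltn_neqAle Hav' andbT; apply/eqP => Heq; subst v; by rewrite ltnn in Hva.
  + move=> Hai; case: (eqVneq a v) => [Heq|Hne].
    * subst v; exists [::], stk; split => //; apply: HA; exact: mem_head.
    * have Hn : a \notin v :: inp by rewrite inE negb_or Hne.
      have [s1 [s2 [-> Hs2]]] := HB Hn; by exists (v :: s1), s2.
  + rewrite inE; case: (eqVneq b v) => [Heq|Hne] /= Hb.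
    * subst v; rewrite eqxx sub1seq.
      have Hn : a \notin b :: inp.
        rewrite inE negb_or; apply/andP; split; first by apply/eqP => E; move: E Habc; clear; lia.
        by apply/negP => /Hidx H; move: H Hab Hbcx; clear; lia.
      by have [s1 [s2 [-> _]]] := HB Hn; rewrite mem_cat mem_head orbT.
    * by rewrite (negbTE Hne); apply: H4.
  + move=> Hci; case: (eqVneq c v) => [Heq|Hne].
    * subst v.
      have Hn : a \notin c :: inp.
        rewrite inE negb_or; apply/andP; split; first by apply/eqP => E; move: E Habc; clear; lia.
        apply/negP => /Hidx H; move: H Hab Hbcx; clear; lia.
      have [s1 [s2 [Es _]]] := HB Hn.
      have Has : a \in stk by rewrite Es mem_cat mem_head orbT.
      have Hbs : b \notin stk.
        apply/negP => /H4 Hba; move/andP: Hc => [_ /negP]; apply.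
        apply/containsP; exists [:: c; b; a]; last by rewrite iso321.
        by rewrite /= eqxx.
      have Hbn : b \notin c :: inp.
        rewrite inE negb_or; apply/andP; split; first by apply/eqP => E; move: E Habc; clear; lia.
        apply/negP => /Hidx H; move: H Hab Hbcx; clear; lia.
      have := Hpfx b bx Hbn; rewrite mem_cat (negbTE Hbs) orbF => Hbo.
      apply: (cat_subseq (s1 := [:: b])); first by rewrite sub1seq.
      by rewrite /= eqxx sub1seq.
    * apply: subseq_ins; apply: H5; by rewrite inE negb_or Hne.
-
  move=> v inp t stk out [[pfx [Ex Hp]] [Hav [[HA HB] [H4 H5]]]] /=; rewrite andbT => Hc.
  have Uo : uniq (out ++ t :: stk) by rewrite -(perm_uniq Hp); move: Ux; rewrite Ex cat_uniq => /andP [].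
  split; [|split; [|split; [split|split]]].
  + by exists pfx; rewrite cat_rcons.
  + by move/andP: Hav => [/avoids_tail -> /avoids_tail ->].
  + by move=> /HA /= /andP [].
  + move=> /HB [[|t' s1] [s2 [Es Hs2]]].
    * case: Es => Et Es; subst t stk; exfalso; move/negP: Hc; apply.
      by move/andP: Hav => [H1 H2]; apply: pop_contra.
    * case: Es => Et Es; subst; by exists s1, s2.
  + move=> Hb; have Hbt : b != t.
      apply/eqP => E; subst t; move: Uo; rewrite cat_uniq => /and3P [_ _ /= /andP [Hn _]].
      by rewrite Hb in Hn.
    have := H4 (mem_behead (s := t :: stk) Hb).
    by rewrite /= (negbTE Hbt).
  + by move=> /H5; rewrite cat_rcons.
-
  split; first by exists [::].
  split; first by [].
  split; first split.
  + by [].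
  + by rewrite Hax.
  split; first by [].
  by rewrite cx.
- by rewrite addn0.
- move=> stk' [out' [[[pfx [Ex Hp]] [_ [_ [_ H5]]]] E]].
  rewrite /s2 /sT; rewrite E.
  rewrite cats0 in Ex; subst pfx; split => //; exact: H5.
Qed.

Definition Inv2 (y : seq nat) (a b c : nat) (inp stk out : seq nat) : Prop :=
  (exists pfx, y = pfx ++ inp /\ perm_eq pfx (out ++ stk)) /\
  (c \notin inp -> b \in out) /\
  (a \notin inp -> subseq [:: b; a] (out ++ stk)).

Lemma west_main y a b c n : uniq y -> a < b < c -> subseq [:: b; c; a] y ->
  west_s y <> iota 1 n.
Proof.
move=> Uy Habc Hsub.
have Hbc : subseq [:: b; c] y by apply: subseq_trans Hsub; rewrite /= !eqxx.
have Hca : subseq [:: c; a] y.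
  apply: subseq_trans Hsub; exact: subseq_cons.
have Hbcx : index b y < index c y by exact: idx_sub.
have Hcax : index c y < index a y by exact: idx_sub.
have bx : b \in y by apply: (mem_subseq Hbc); rewrite inE eqxx.
have cx : c \in y by apply: (mem_subseq Hbc); rewrite !inE eqxx orbT.
have ax : a \in y by apply: (mem_subseq Hca); rewrite !inE eqxx orbT.
have Hrun := @run_inv [:: [:: 2; 1]] (Inv2 y a b c) isT.
have [] := Hrun _ _ (2 * size y).+1 y [::] [::] _ _.
- move=> v inp stk out [[pfx [Ey Hp]] [H2 H3]] /=; rewrite andbT => Hc.
  have Ey' : y = rcons pfx v ++ inp by rewrite cat_rcons.
  have Uy' := Uy; rewrite Ey' in Uy'.
  have Hidx w : w \in inp -> index v y < index w y.
    by move=> Hw; rewrite Ey'; apply: idx_cat => //; rewrite mem_rcons mem_head.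
  have Hpfx w : w \in y -> w \notin v :: inp -> w \in out ++ stk.
    move=> Hw Hn; rewrite -(perm_mem Hp); move: Hw; rewrite Ey mem_cat.
    by case/orP => // H; rewrite H in Hn.
  split; [|split].
  + by exists (rcons pfx v); split => //; apply: perm_push.
  + move=> Hci; case: (eqVneq c v) => [Heq|Hne].
    * subst v.
      have Hbs : b \notin stk.
        apply/negP => Hb; move/negP: Hc; apply.
        apply/containsP; exists [:: c; b]; last by rewrite iso21; case/andP: Habc.
        by rewrite /= eqxx sub1seq.
      have Hbn : b \notin c :: inp.
        rewrite inE negb_or; apply/andP; split.
          by apply/eqP => E; move: E Habc; clear; lia.
        by apply/negP => /Hidx H; move: H Hbcx; clear; lia.
      by have := Hpfx b bx Hbn; rewrite mem_cat (negbTE Hbs) orbF.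
    * by apply: H2; rewrite inE negb_or Hne.
  + move=> Hai; case: (eqVneq a v) => [Heq|Hne].
    * subst v.
      have Hcn : c \notin a :: inp.
        rewrite inE negb_or; apply/andP; split.
          by apply/eqP => E; move: E Habc; clear; lia.
        by apply/negP => /Hidx H; move: H Hcax; clear; lia.
      apply: (cat_subseq (s1 := [:: b])); first by rewrite sub1seq; exact: H2.
      by rewrite sub1seq mem_head.
    * apply: subseq_ins; apply: H3; by rewrite inE negb_or Hne.
- move=> v inp t stk out [[pfx [Ey Hp]] [H2 H3]] _.
  split; [|split].
  + by exists pfx; rewrite cat_rcons.
  + by move=> /H2 H; rewrite mem_rcons inE H orbT.
  + by move=> /H3; rewrite cat_rcons.
- split; first by exists [::].
  by split; [rewrite cx | rewrite ax].
- by rewrite addn0.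
- move=> stk' [out' [[_ [_ H3]] E]].
  rewrite /west_s /sT E => Ew.
  have := H3 isT; rewrite Ew => Hs.
  have := subseq_sorted ltn_trans Hs (iota_ltn_sorted 1 n).
  rewrite /= andbT => H; move: H Habc; clear; lia.
Qed.

Theorem proposition3p2 (n : nat) (x : seq nat) :
  Sort_n n [:: 1; 3; 2] [:: 3; 2; 1] x -> avoids x [:: 1; 2; 3].
Proof.
move=> [Hperm Hw]; apply/negP => /contains3 [] // u1 [u2 [u3 [Hsub Hiso]]].
rewrite iso123 in Hiso.
have Ux : uniq x by rewrite (perm_uniq Hperm) iota_uniq.
have H12 : subseq [:: u1; u2] x by apply: subseq_trans Hsub; rewrite /= !eqxx.
have H23 : subseq [:: u2; u3] x.
  apply: subseq_trans Hsub; exact: subseq_cons.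
have u1x : u1 \in x by apply: (mem_subseq H12); rewrite inE eqxx.
have i12 : index u1 x < index u2 x by exact: idx_sub.
set pre := [seq z <- x | index z x < index u2 x].
have u1p : u1 \in pre by rewrite mem_filter i12 u1x.
have [a [Hap Hamin]] : exists m, m \in pre /\ forall z, z \in pre -> m <= z.
  apply: seq_min; by case: pre u1p.
have au1 := Hamin u1 u1p.
move: Hap; rewrite mem_filter => /andP [Hai Hax].
have [Hs Hp] := @s2_main x a u2 u3 Ux ltac:(move: au1 Hiso; clear; lia) H23 Hax Hai
  (fun z zx zi => Hamin z ltac:(by rewrite mem_filter zi zx)).
apply: (@west_main _ a u2 u3 n _ _ Hs Hw).
- by rewrite -(perm_uniq Hp).
- by move: au1 Hiso; clear; lia.
Qed.
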